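(* Let $R$ be a valuation domain of cardinality $\aleph_1$, $J/R$ a type with $J=\bigcup_{\sigma<\omega_1} r_\sigma^{-1}R$ as in the context, and $U$ a uniserial $R$-module of type $J/R$. If $U$ has a special family of functions, then $U$ is non-standard.
   Context: A valuation domain is an integral domain whose ideals are linearly ordered; $Q$ is its quotient field ($Q\neq R$). A module is uniserial if its submodules are linearly ordered by inclusion. A uniserial $R$-module is standard if it is isomorphic to $J'/A$ for $R$-submodules $A\subseteq J'$ of $Q$, and non-standard otherwise. For a uniserial $U$ and $0\neq a\in U$, let $\mathrm{Ann}(a)=\{r\in R: ra=0\}$ and $D(a)=\bigcup\{r^{-1}R: a\in rU\}$; $U$ has type $J/A$ if $J/A\cong D(a)/\mathrm{Ann}(a)$ (independent of $a$). A type $J/R$: $J$ is an $R$-submodule of $Q$ with $R\subseteq J$, written $J=\bigcup_{\sigma<\omega_1} r_\sigma^{-1}R$ with nonzero $r_\sigma\in R$ such that $r_\tau\mid r_\sigma$ for $\tau<\sigma$. Special family: for $U$ of type $J/R$, fix for each $\sigma<\omega_1$ an element $a_\sigma\in U$ with $\mathrm{Ann}(a_\sigma)=r_\sigma R$, and let $I_\sigma$ be the set of all $R$-module isomorphisms $a_\sigma R\to r_\sigma^{-1}R/R$. A family $\{f_\sigma:\sigma<\omega_1\}$ of functions $f_\sigma: I_\sigma\to\mathbb{Q}$ is a special family of functions for $U$ if whenever $\sigma<\rho$, $\varphi\in I_\rho$, $\psi\in I_\sigma$ and $\varphi$ extends $\psi$ (note $a_\sigma R\subseteq a_\rho R$ and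 $r_\sigma^{-1}R/R\subseteq r_\rho^{-1}R/R$), then $f_\sigma(\psi)<f_\rho(\varphi)$. $U$ is called explicitly non-standard if it has a special family of functions. *)

(* Defs.v *)
From HB Require Import structures.
From mathcomp Require Import all_boot all_order all_algebra.
Set Implicit Arguments. Unset Strict Implicit. Unset Printing Implicit Defensive.
Import Order.TTheory GRing.Theory Num.Theory.
Local Open Scope ring_scope.

Definition countable_type (T : Type) : Prop := exists f : T -> nat, injective f.

Definition is_omega1 (I : Type) (lt : I -> I -> Prop) : Prop :=
  [/\ (forall x, ~ lt x x),
      (forall x y z, lt x y -> lt y z -> lt x z),
      (forall x y, lt x y \/ x = y \/ lt y x) &
      well_founded lt] /\
  (~ countable_type I /\
   (forall s : I, countable_type {t : I | lt t s})).

Section Defs.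
Variable R : idomainType.
Local Notation Q := {fraction R}.
Local Notation "x %:F" := (@tofrac R x).

Definition is_ideal (P : R -> Prop) : Prop :=
  [/\ P 0, (forall x y, P x -> P y -> P (x + y)) & (forall c x, P x -> P (c * x))].

Definition valuation_domain : Prop :=
  (forall I1 I2 : R -> Prop, is_ideal I1 -> is_ideal I2 ->
      (forall x, I1 x -> I2 x) \/ (forall x, I2 x -> I1 x)) /\
  (exists q : Q, forall s : R, q <> s%:F).

Definition subQ (S : Q -> Prop) : Prop :=
  [/\ S 0, (forall x y, S x -> S y -> S (x + y)) & (forall (c : R) x, S x -> S (c%:F * x))].

Definition Rset : Q -> Prop := fun q => exists s : R, q = s%:F.
Definition invR (r : R) : Q -> Prop := fun q => exists s : R, q = s%:F / r%:F.

Definition cls (A : Q -> Prop) (x : Q) : Q -> Prop := fun y => A (y - x).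

(* the quotient module J'/A, elements are the cosets x + A with x in J' *)
Definition quotT (J' A : Q -> Prop) : Type :=
  {C : Q -> Prop | exists x, J' x /\ C = cls A x}.

Definition qadd (A : Q -> Prop) (C D : Q -> Prop) : Q -> Prop :=
  fun z => exists x y, [/\ C x, D y & A (z - (x + y))].
Definition qscale (A : Q -> Prop) (c : R) (C : Q -> Prop) : Q -> Prop :=
  fun z => exists x, C x /\ A (z - c%:F * x).

Definition quot_iso (J1 A1 J2 A2 : Q -> Prop) : Prop :=
  exists g : quotT J1 A1 -> quotT J2 A2,
  [/\ bijective g,
      (forall c d e : quotT J1 A1, sval e = qadd A1 (sval c) (sval d) ->
          sval (g e) = qadd A2 (sval (g c)) (sval (g d))) &
      (forall (s : R) (c e : quotT J1 A1), sval e = qscale A1 s (sval c) ->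
          sval (g e) = qscale A2 s (sval (g c)))].

Variable U : lmodType R.

Definition submod (S : U -> Prop) : Prop :=
  [/\ S 0, (forall x y, S x -> S y -> S (x + y)) & (forall (c : R) x, S x -> S (c *: x))].

Definition uniserial : Prop :=
  forall S T : U -> Prop, submod S -> submod T ->
    (forall x, S x -> T x) \/ (forall x, T x -> S x).

Definition standard : Prop :=
  exists J' A : Q -> Prop, [/\ subQ J', subQ A, (forall x, A x -> J' x) &
    exists g : U -> quotT J' A,
    [/\ bijective g,
        (forall u v, sval (g (u + v)) = qadd A (sval (g u)) (sval (g v))) &
        (forall (s : R) u, sval (g (s *: u)) = qscale A s (sval (g u)))]].

Definition non_standard : Prop := ~ standard.

Definition AnnQ (a : U) : Q -> Prop := fun q => exists s : R, q = s%:F /\ s *: a = 0.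
Definition Dset (a : U) : Q -> Prop :=
  fun q => exists r : R, [/\ r != 0, (exists u : U, a = r *: u) & invR r q].

(* U has type J/A (witnessed at some a <> 0; independent of a) *)
Definition has_type (J A : Q -> Prop) : Prop :=
  exists a : U, a != 0 /\ quot_iso J A (Dset a) (AnnQ a).

Definition cycl (a : U) : U -> Prop := fun u => exists s : R, u = s *: a.

Definition is_iso_cyc (a : U) (r : R)
    (phi : {u : U | cycl a u} -> quotT (invR r) Rset) : Prop :=
  [/\ bijective phi,
      (forall u v w : {u : U | cycl a u}, sval w = sval u + sval v ->
          sval (phi w) = qadd Rset (sval (phi u)) (sval (phi v))) &
      (forall (s : R) (u w : {u : U | cycl a u}), sval w = s *: sval u ->
          sval (phi w) = qscale Rset s (sval (phi u)))].

Definition Iso_set (a : U) (r : R) : Type :=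
  {phi : {u : U | cycl a u} -> quotT (invR r) Rset | is_iso_cyc phi}.

Definition extends (a a' : U) (r r' : R)
    (phi : Iso_set a' r') (psi : Iso_set a r) : Prop :=
  forall (u : {u : U | cycl a u}) (u' : {u : U | cycl a' u}),
    sval u = sval u' -> sval (sval phi u') = sval (sval psi u).

Definition special_family (I : Type) (lt : I -> I -> Prop) (r : I -> R) (a : I -> U)
    (f : forall s : I, Iso_set (a s) (r s) -> rat) : Prop :=
  forall (sg rho : I), lt sg rho ->
    forall (phi : Iso_set (a rho) (r rho)) (psi : Iso_set (a sg) (r sg)),
      extends phi psi -> f sg psi < f rho phi.

End Defs.

Definition Jtype (R : idomainType) (I : Type) (r : I -> R) : {fraction R} -> Prop :=
  fun q => exists s : I, invR (r s) q.

(* Main.v *)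
Require Import Defs.
From HB Require Import structures.
From mathcomp Require Import all_boot all_order all_algebra generic_quotient.
From mathcomp Require Import ring.
From Stdlib Require Import FunctionalExtensionality PropExtensionality ProofIrrelevance ClassicalEpsilon Classical.
Set Implicit Arguments. Unset Strict Implicit. Unset Printing Implicit Defensive.
Import Order.TTheory GRing.Theory Num.Theory.
Local Open Scope ring_scope.
Section P1.
Local Open Scope quotient_scope.

Lemma frac_rep (R : idomainType) (x : {fraction R}) :
  exists n d : R, d != 0 /\ x = (tofrac n) / (tofrac d).
Proof.
elim/quotW: x => y.
exists (y.1), (y.2); split; first exact: denom_ratioP.
unlock tofrac.
rewrite -[_^-1]FracField.pi_inv.
rewrite -[_ * _]FracField.pi_mul.
congr (\pi _).
rewrite /FracField.mulf /FracField.invf /= !numden_Ratio ?oner_neq0 ?denom_ratioP // mulr1 mul1r Ratio_numden //.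
Qed.

Lemma pext (T : Type) (P Q : T -> Prop) : (forall z, P z <-> Q z) -> P = Q.
Proof. move=> H; apply: functional_extensionality => z; apply: propositional_extensionality; exact: H. Qed.

Lemma sig_eq (T : Type) (P : T -> Prop) (x y : {z | P z}) : sval x = sval y -> x = y.
Proof. case: x y => [x px] [y py] /= e; subst y; f_equal; apply: proof_irrelevance. Qed.

Lemma bij_of (A B : Type) (f : A -> B) : injective f -> (forall y, exists x, f x = y) -> bijective f.
Proof.
move=> fi fs.
pose g y := proj1_sig (constructive_indefinite_description _ (fs y)).
have gK : forall y, f (g y) = y by move=> y; rewrite /g; case: constructive_indefinite_description.
exists g => [x|y]; last exact: gK.
by apply: fi; rewrite gK.
Qed.

Lemma omega1_no_rat (I : Type) (lt : I -> I -> Prop) (hI : is_omega1 lt) (f : I -> rat) :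
  (forall x y, lt x y -> (f x < f y)%R) -> False.
Proof.
case: hI => [[irr _ tot _] [nc _]] fi.
apply: nc; exists (fun x => pickle (f x)) => x y /= e.
have e' : f x = f y by apply: (pcan_inj (@pickleK _)).
case: (tot x y) => [h|[//|h]].
- by move: (fi _ _ h); rewrite e' ltxx.
- by move: (fi _ _ h); rewrite e' ltxx.
Qed.

End P1.


Section Q.
Variable R : idomainType.
Local Notation Q := {fraction R}.
Local Notation "x %:F" := (@tofrac R x).

Lemma subQN (A : Q -> Prop) : subQ A -> forall x, A x -> A (- x).
Proof. case=> _ _ hs x hx; have := hs (-1) x hx; by rewrite tofracN tofrac1 mulN1r. Qed.

Lemma subQB (A : Q -> Prop) : subQ A -> forall x y, A x -> A y -> A (x - y).
Proof. move=> hA x y hx hy; have hy' := subQN hA hy; case: hA => _ ha _; exact: ha. Qed.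

Lemma subQM (A : Q -> Prop) : subQ A -> forall (c : R) x, A x -> A (x * c%:F).
Proof. case=> _ _ hs c x hx; rewrite mulrC; exact: hs. Qed.

Lemma cls_eq (A : Q -> Prop) : subQ A -> forall x y, cls A x = cls A y <-> A (x - y).
Proof.
move=> hA x y; split.
- move=> e; have : cls A x x by rewrite /cls subrr; case: hA.
  by rewrite e.
- move=> h; apply: pext => z; rewrite /cls; split => hz.
  + have -> : z - y = (z - x) + (x - y) by ring.
    by case: hA => _ ha _; apply: (ha).
  + have -> : z - x = (z - y) - (x - y) by ring.
    exact: subQB.
Qed.

Lemma qadd_cls (A : Q -> Prop) : subQ A -> forall x y, qadd A (cls A x) (cls A y) = cls A (x + y).
Proof.
move=> hA x y; apply: pext => z; rewrite /qadd /cls; split.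
- case=> x' [y' [h1 h2 h3]].
  have -> : z - (x + y) = (z - (x' + y')) + ((x' - x) + (y' - y)) by ring.
  by case: hA => _ ha _; apply: (ha) => //; apply: (ha).
- move=> h; exists x, y; split => //; rewrite subrr; by case: hA.
Qed.

Lemma qscale_cls (A : Q -> Prop) : subQ A -> forall (s : R) x, qscale A s (cls A x) = cls A (s%:F * x).
Proof.
move=> hA s x; apply: pext => z; rewrite /qscale /cls; split.
- case=> x' [h1 h2].
  have -> : z - s%:F * x = (z - s%:F * x') + s%:F * (x' - x) by ring.
  by case: hA => _ ha hs; apply: (ha) => //; apply: (hs).
- move=> h; exists x; split => //; rewrite subrr; by case: hA.
Qed.

Lemma Rset_sub : subQ (@Rset R).
Proof.
split.
- by exists 0; rewrite tofrac0.
- by move=> x y [a ->] [b ->]; exists (a + b); rewrite tofracD.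
- by move=> c x [a ->]; exists (c * a); rewrite tofracM.
Qed.

Lemma Rset_of (x : R) : @Rset R x%:F. Proof. by exists x. Qed.

Lemma Rset_mul (x y : Q) : @Rset R x -> @Rset R y -> @Rset R (x * y).
Proof. by move=> [a ->] [b ->]; exists (a * b); rewrite tofracM. Qed.

Lemma frac_neq0 (x : R) : x != 0 -> x%:F != 0.
Proof. by rewrite tofrac_eq0. Qed.

Hypothesis hval : valuation_domain R.

Lemma cmpR (x y : R) : (exists c, x = y * c) \/ (exists c, y = x * c).
Proof.
case: hval => h _.
pose I1 := fun z : R => exists c, z = y * c.
pose I2 := fun z : R => exists c, z = x * c.
have i1 : is_ideal I1.
  split; first by exists 0; rewrite mulr0.
  - by move=> a b [c ->] [d ->]; exists (c + d); rewrite mulrDr.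
  - by move=> c a [d ->]; exists (c * d); rewrite mulrCA.
have i2 : is_ideal I2.
  split; first by exists 0; rewrite mulr0.
  - by move=> a b [c ->] [d ->]; exists (c + d); rewrite mulrDr.
  - by move=> c a [d ->]; exists (c * d); rewrite mulrCA.
case: (h I1 I2 i1 i2) => H.
- right; apply: H; by exists 1; rewrite mulr1.
- left; apply: H; by exists 1; rewrite mulr1.
Qed.

End Q.


Section Iso.
Variable R : idomainType.
Local Notation Q := {fraction R}.
Local Notation "x %:F" := (@tofrac R x).
Variable U : lmodType R.
Hypothesis hval : valuation_domain R.
Variable rho : U -> Q.
Hypothesis P1 : forall u v, @Rset R (rho (u + v) - (rho u + rho v)).
Hypothesis P2 : forall (s : R) u, @Rset R (rho (s *: u) - s%:F * rho u).
Hypothesis P3 : forall u v, @Rset R (rho u - rho v) -> u = v.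

Let RS := Rset_sub R.

Lemma rho0 : @Rset R (rho 0).
Proof. have := P2 0 0; by rewrite scale0r tofrac0 mul0r subr0. Qed.

Lemma annP (s : R) u : s *: u = 0 <-> @Rset R (s%:F * rho u).
Proof.
split => h.
- have := P2 s u; rewrite h => h2.
  have -> : s%:F * rho u = rho 0 - (rho 0 - s%:F * rho u) by ring.
  apply: subQB => //; exact: rho0.
- apply: P3; have -> : rho (s *: u) - rho 0 = (rho (s *: u) - s%:F * rho u) + s%:F * rho u - rho 0 by ring.
  apply: subQB => //; last exact: rho0.
  by case: RS => _ ha _; apply: (ha).
Qed.

Variable a : U.
Variable r : R.
Hypothesis hr : r != 0.
Hypothesis ha : forall x : R, x *: a = 0 <-> exists c, x = r * c.

Lemma cycl_ann (w : {u : U | cycl a u}) : r *: sval w = 0.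
Proof.
case: w => u [s hs] /=; rewrite hs scalerA mulrC -scalerA.
have : r *: a = 0 by apply/ha; exists 1; rewrite mulr1.
by move=> ->; rewrite scaler0.
Qed.

Lemma inv_pf (w : {u : U | cycl a u}) :
  exists x, invR r x /\ cls (@Rset R) (rho (sval w)) = cls (@Rset R) x.
Proof.
exists (rho (sval w)); split; last by [].
have := cycl_ann w; move/annP => [e he].
exists e; rewrite -he mulrC mulKf //; exact: frac_neq0.
Qed.

Definition phi (w : {u : U | cycl a u}) : quotT (invR r) (@Rset R) :=
  exist _ (cls (@Rset R) (rho (sval w))) (inv_pf w).

Lemma cls_R x y : @Rset R (x - y) -> cls (@Rset R) x = cls (@Rset R) y.
Proof. by move=> h; apply: (proj2 (cls_eq RS _ _)). Qed.

Lemma phi_iso : is_iso_cyc phi.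
Proof.
split.
- apply: bij_of.
  + move=> w1 w2 e; apply: sig_eq; apply: P3.
    have h := congr1 sval e; simpl in h.
    exact: (proj1 (cls_eq RS _ _) h).
  + case=> C [x [[e hx] hC]].
    have [q hq] : exists q, r%:F * rho a = q%:F.
      have : r *: a = 0 by apply/ha; exists 1; rewrite mulr1.
      by move/annP => [q hq]; exists q.
    have hrF := frac_neq0 hr.
    have hra : rho a = q%:F / r%:F by rewrite -hq mulrC mulKf.
    have [s hs] : exists s : R, @Rset R (s%:F * rho a - x).
      case: (cmpR hval q r) => [[k hk]|[k hk]].
      * (* rho a in R, so r unit *)
        have : 1 *: a = 0.
          apply/annP; exists k; rewrite tofrac1 mul1r hra hk tofracM mulrC mulKf //.
        move/ha => [c hc].
        exists 0; rewrite tofrac0 mul0r sub0r; apply: subQN => //.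
        exists (e * c); rewrite hx tofracM.
        have : (r%:F * c%:F) = 1 by rewrite -tofracM -hc tofrac1.
        move=> h1; have -> : c%:F = r%:F^-1 by apply: (mulfI hrF); rewrite h1 divff.
        by [].
      *
        have hq0 : q != 0 by apply/eqP => q0; move: hr; rewrite hk q0 mul0r eqxx.
        have hqF := frac_neq0 hq0.
        have : k *: a = 0.
          apply/annP; exists 1; rewrite tofrac1 hra mulrA [k%:F * _]mulrC -tofracM -hk divff //.
        move/ha => [m hm].
        have hqm : q * m = 1.
          have e1 : r * (q * m) = r * 1 by rewrite mulr1 {2}hk hm mulrCA.
          exact: (mulfI hr e1).
        exists (e * m); rewrite hx hra tofracM.
        have : q%:F * m%:F = 1 by rewrite -tofracM hqm tofrac1.
        move=> h1.
        have -> : e%:F * m%:F * (q%:F / r%:F) - e%:F / r%:F = e%:F / r%:F * (q%:F * m%:F - 1) by ring.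
        by rewrite h1 subrr mulr0; exists 0; rewrite tofrac0.
    have cyc : cycl a (s *: a) by exists s.
    exists (exist _ (s *: a) cyc); apply: sig_eq => /=.
    rewrite hC; apply: cls_R.
    have -> : rho (s *: a) - x = (rho (s *: a) - s%:F * rho a) + (s%:F * rho a - x) by ring.
    by case: RS => _ hadd _; apply: hadd.
- move=> u v w hw /=.
  rewrite (qadd_cls RS); apply: cls_R; rewrite hw; exact: P1.
- move=> s u w hw /=.
  rewrite (qscale_cls RS); apply: cls_R; rewrite hw; exact: P2.
Qed.

Definition phiI : Iso_set a r := exist _ phi phi_iso.

End Iso.


Section Triv.
Variable R : idomainType.
Local Notation Q := {fraction R}.
Local Notation "x %:F" := (@tofrac R x).
Variable U : lmodType R.
Variable a : U.
Variable r c : R.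
Hypothesis hrc : 1 = r * c.
Hypothesis ha0 : a = 0.
Let RS := Rset_sub R.

Lemma pf0 : exists x, invR r x /\ cls (@Rset R) 0 = cls (@Rset R) x.
Proof. exists 0; split => //; exists 0; by rewrite tofrac0 mul0r. Qed.

Definition tphi (w : {u : U | cycl a u}) : quotT (invR r) (@Rset R) :=
  exist _ (cls (@Rset R) 0) pf0.

Lemma tphi_iso : is_iso_cyc tphi.
Proof.
have cz : forall w : {u : U | cycl a u}, sval w = 0.
  by case=> u [s hs] /=; rewrite hs ha0 scaler0.
split.
- apply: bij_of.
  + by move=> w1 w2 _; apply: sig_eq; rewrite !cz.
  + case=> C [x [[e hx] hC]].
    have c0 : cycl a 0 by exists 0; rewrite scale0r.
    exists (exist _ 0 c0); apply: sig_eq => /=.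
    rewrite hC; apply: (proj2 (cls_eq RS _ _)).
    rewrite sub0r; apply: subQN => //.
    have hr : r != 0 by apply/eqP => r0; move: hrc; rewrite r0 mul0r => /eqP; rewrite oner_eq0.
    have h1 : r%:F * c%:F = 1 by rewrite -tofracM -hrc tofrac1.
    have -> : x = e%:F * c%:F.
      rewrite hx; congr (_ * _); apply: (mulfI (frac_neq0 hr)); rewrite h1 divff // frac_neq0 //.
    by exists (e * c); rewrite tofracM.
- by move=> u v w _ /=; rewrite (qadd_cls RS) addr0.
- by move=> s u w _ /=; rewrite (qscale_cls RS) mulr0.
Qed.

Definition tphiI : Iso_set a r := exist _ tphi tphi_iso.
End Triv.

Local Notation "x %:F" := (@tofrac _ x).

Lemma family_false (R : idomainType) (U : lmodType R) (I : Type) (lt : I -> I -> Prop)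
  (hI : is_omega1 lt) (r : I -> R) (a : I -> U)
  (hspec : exists f : forall s : I, Iso_set (a s) (r s) -> rat, special_family lt f)
  (phi : forall s, Iso_set (a s) (r s))
  (hext : forall s t, lt s t -> extends (phi t) (phi s)) : False.
Proof.
case: hspec => f hf.
apply: (omega1_no_rat hI (f := fun s => f s (phi s))) => x y hxy.
exact: hf hxy _ _ (hext _ _ hxy).
Qed.

Theorem mainTheorem6
  (R : idomainType) (hval : valuation_domain R)
  (I : Type) (lt : I -> I -> Prop) (hI : is_omega1 lt)
  (hcard : exists h : R -> I, bijective h)
  (r : I -> R) (hr0 : forall s : I, r s != 0)
  (hdiv : forall t s : I, lt t s -> exists c : R, r s = r t * c)
  (U : lmodType R) (huni : uniserial U)
  (htype : has_type U (Jtype r) (@Rset R))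
  (a : I -> U) (ha : forall (s : I) (x : R), x *: a s = 0 <-> exists c : R, x = r s * c)
  (hspec : exists f : forall s : I, Iso_set (a s) (r s) -> rat,
             special_family lt f) :
  non_standard U.
Proof.
case: (classic (exists s0, ~ exists c, 1 = r s0 * c)) => [[s0 hs0]|hall]; last first.
  have hu : forall s, exists c, 1 = r s * c.
    by move=> s; apply: NNPP => h; apply: hall; exists s.
  move=> _.
  pose c s := proj1_sig (constructive_indefinite_description _ (hu s)).
  have hc : forall s, 1 = r s * c s.
    by move=> s; rewrite /c; case: constructive_indefinite_description.
  have ha0 : forall s, a s = 0.
    move=> s; rewrite -[a s]scale1r; apply/ha; exists (c s); exact: hc.
  apply: (family_false hI hspec (phi := fun s => tphiI (hc s) (ha0 s))).
  by move=> s t _ u u' _.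
move=> [J' [A [hJ hA hAJ [g [gbij gadd gscale]]]]].
pose rep u := proj1_sig (constructive_indefinite_description _ (svalP (g u))).
have repP : forall u, sval (g u) = cls A (rep u).
  by move=> u; rewrite /rep; case: constructive_indefinite_description => x [].
have F1 : forall u v, A (rep (u + v) - (rep u + rep v)).
  move=> u v; apply/(proj1 (cls_eq hA _ _)).
  by rewrite -(qadd_cls hA) -!repP gadd.
have F2 : forall (s : R) u, A (rep (s *: u) - s%:F * rep u).
  move=> s u; apply/(proj1 (cls_eq hA _ _)).
  by rewrite -(qscale_cls hA) -!repP gscale.
have F3 : forall u v, A (rep u - rep v) -> u = v.
  move=> u v h; apply: (bij_inj gbij); apply: sig_eq.
  by rewrite !repP; apply: (proj2 (cls_eq hA _ _)).
have A0 : A 0 by case: hA.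
have Aadd : forall x y, A x -> A y -> A (x + y) by case: hA.
have rep0 : A (rep 0).
  by have := F2 0 0; rewrite scale0r tofrac0 mul0r subr0.
have annA : forall (s : R) u, s *: u = 0 <-> A (s%:F * rep u).
  move=> s u; split => h.
  - have := F2 s u; rewrite h => h2.
    have -> : s%:F * rep u = rep 0 - (rep 0 - s%:F * rep u) by ring.
    exact: subQB.
  - apply: F3; have -> : rep (s *: u) - rep 0 = (rep (s *: u) - s%:F * rep u) + s%:F * rep u - rep 0 by ring.
    apply: subQB => //; exact: Aadd.
pose r0 := r s0; pose q0 := rep (a s0).
have ht : A (r0%:F * q0) by apply/annA; apply/ha; exists 1; rewrite mulr1.
have hnot1 : ~ (1 *: a s0 = 0) by move/ha => [c hc]; apply: hs0; exists c.
have hr0F : r0%:F != 0 := frac_neq0 (hr0 s0).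
have ht0 : r0%:F * q0 != 0.
  rewrite mulf_eq0 (negbTE hr0F) /=; apply/eqP => q00; apply: hnot1; apply/annA.
  by rewrite -/q0 q00 mulr0.
have RS := Rset_sub R.
have Rset0 : @Rset R 0 by exists 0; rewrite tofrac0.
have tR : forall y, A y -> @Rset R (y / (r0%:F * q0)).
  move=> y hy; case: (frac_rep (y / (r0%:F * q0))) => n [d [hd hnd]]; rewrite hnd.
  case: (cmpR hval n d) => [[k hk]|[k hk]].
  - rewrite hk tofracM mulrC mulKf ?frac_neq0 //; exact: Rset_of.
  - case: (eqVneq n 0) => [n0|nn0]; first by rewrite n0 tofrac0 mul0r.
    have hk0 : k != 0 by apply/eqP => k0; move: hd; rewrite hk k0 mulr0 eqxx.
    have kF := frac_neq0 hk0.
    have e1 : y / (r0%:F * q0) = k%:F^-1 by rewrite hnd hk tofracM invfM mulVKf ?frac_neq0.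
    have hyk : y * k%:F = r0%:F * q0.
      have e2 : y = k%:F^-1 * (r0%:F * q0) by rewrite -e1 divfK.
      by rewrite {1}e2 mulrAC mulVf // mul1r.
    rewrite -hnd e1.
    case: (cmpR hval k r0) => [[m hm]|[m hm]].
    + exfalso; apply: hnot1; apply/annA.
      have : r0%:F * q0 = r0%:F * (y * m%:F) by rewrite -hyk hm tofracM; ring.
      move/(mulfI hr0F) => hq; rewrite -/q0 hq tofrac1 mul1r; exact: subQM.
    + have e3 : m%:F * q0 = y.
        apply: (mulfI kF); rewrite mulrA -tofracM -hm -/r0 -hyk mulrC //.
      have : m *: a s0 = 0 by apply/annA; rewrite -/q0 e3.
      move/ha => [j hj].
      have hkj : k * j = 1.
        have e4 : r0 * (k * j) = r0 * 1 by rewrite mulr1 {2}hm hj mulrCA.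
        exact: (mulfI (hr0 s0) e4).
      have -> : k%:F^-1 = j%:F.
        apply: (mulfI kF); rewrite divff // -tofracM hkj tofrac1 //.
      exact: Rset_of.
pose rho u := rep u / (r0%:F * q0).
have P1 : forall u v, @Rset R (rho (u + v) - (rho u + rho v)).
  move=> u v; have -> : rho (u + v) - (rho u + rho v) = (rep (u + v) - (rep u + rep v)) / (r0%:F * q0) by rewrite /rho; ring.
  exact: tR.
have P2 : forall (s : R) u, @Rset R (rho (s *: u) - s%:F * rho u).
  move=> s u; have -> : rho (s *: u) - s%:F * rho u = (rep (s *: u) - s%:F * rep u) / (r0%:F * q0) by rewrite /rho; ring.
  exact: tR.
have P3 : forall u v, @Rset R (rho u - rho v) -> u = v.
  move=> u v [e he]; apply: F3.
  have -> : rep u - rep v = (rho u - rho v) * (r0%:F * q0) by rewrite /rho -mulrBl divfK.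
  rewrite he mulrC; exact: subQM.
apply: (family_false hI hspec (phi := fun s => phiI hval P1 P2 P3 (hr0 s) (ha s))).
by move=> s t _ u u' e; rewrite /phiI /phi /= e.
Qed.
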